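(* Let $U\subset\mathbb{R}^s$ be open, $X:U\to\mathbb{R}^{n+1}_1$ a spacelike embedding, $M=X(U)$, $n^T$ a smooth future directed unit timelike normal field, and $H:U\times\mathbb{S}^{n-1}_+\to\mathbb{R}$, $H(u,v)=\langle X(u),v\rangle$, with $h_v=H(\cdot,v)$. Let $u_0\in U$, $p_0=X(u_0)$, $v_0\in\mathbb{S}^{n-1}_+$. Then: (1) $\frac{\partial H}{\partial u_i}(u_0,v_0)=0$ for all $i=1,\dots,s$ if and only if there exists $\xi_0\in N_1(M)_{p_0}[n^T]$ with $v_0=\widetilde{\mathbb{LG}}(n^T)(p_0,\xi_0)$. Suppose now $v_0=\widetilde{\mathbb{LG}}(n^T)(p_0,\xi_0)$ with $\xi_0\in N_1(M)_{p_0}[n^T]$, and let $n^S$ be a local smooth section of $N_1(M)[n^T]$ with $n^S(u_0)=\xi_0$. Then (2) $p_0$ is a $(n^T(u_0),\xi_0)$-parabolic point (i.e. $K_\ell(n^T,n^S)(u_0)=0$) if and only if $\det\mathrm{Hess}(h_{v_0})(u_0)=0$; (3) $p_0$ is a flat $(n^T(u_0),\xi_0)$-umbilical point (i.e. $S_{p_0}(n^T,n^S)=0$) if and only if $\mathrm{rank}\,\mathrm{Hess}(h_{v_0})(u_0)=0$; (4) $u_0$ is a non-degenerate critical point of $h_{v_0}$ if and only if $(p_0,\xi_0)$ is a regular point of $\widetilde{\mathbb{LG}}(n^T)$.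
   Context: $\mathbb{R}^{n+1}_1$ is $\mathbb{R}^{n+1}$ with $\langle x,y\rangle=-x_0y_0+\sum_{i=1}^n x_iy_i$; spacelike embedding means tangent spaces consist of vectors with $\langle v,v\rangle>0$. $\mathbb{S}^{n-1}_+=\{x:\langle x,x\rangle=0,x_0=1\}$; for nonzero lightlike $x$, $\widetilde x=x/x_0$. $N_p(M)$ is the pseudo-orthogonal complement of $T_pM$; $n^T(u)\in N_{X(u)}(M)$, $\langle n^T,n^T\rangle=-1$, $n^T_0>0$. $N_1(M)_p[n^T]=\{\xi\in N_p(M):\langle\xi,\xi\rangle=1,\langle\xi,n^T(p)\rangle=0\}$, $N_1(M)[n^T]=\bigcup_pN_1(M)_p[n^T]$, and $\widetilde{\mathbb{LG}}(n^T):N_1(M)[n^T]\to\mathbb{S}^{n-1}_+$, $(p,\xi)\mapsto\widetilde{n^T(p)+\xi}$ (a map between $(n-1)$-manifolds). With $\pi^\tau:T_pM\oplus N_p(M)\to T_pM$ the projection, $S_p(n^T,n^S)=-\pi^\tau\circ d_p(n^T+n^S)$ and $K_\ell(n^T,n^S)=\det S_p(n^T,n^S)$; these depend at $u_0$ only on $n^T(u_0)$ and $n^S(u_0)$. *)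

(* Defs.v *)
From HB Require Import structures.
From mathcomp Require Import all_boot all_order all_algebra.
From mathcomp Require Import all_classical all_reals all_analysis.
Set Implicit Arguments. Unset Strict Implicit. Unset Printing Implicit Defensive.
Import Order.TTheory GRing.Theory Num.Theory.
Import numFieldNormedType.Exports.
Local Open Scope classical_set_scope.
Local Open Scope ring_scope.

(* Points of R^{n+1}_1 are row vectors 'rV[R]_(n.+1); coordinate ord0 is x_0.
   Points of the parameter space R^s are row vectors 'rV[R]_s. *)

Section LorentzDefs.
Context {R : realType}.

Definition lprod {n : nat} (x y : 'rV[R]_n.+1) : R :=
  - (x 0 ord0 * y 0 ord0) + \sum_(i < n.+1 | i != ord0) x 0 i * y 0 i.

Definition ebasis {s : nat} (i : 'I_s) : 'rV[R]_s := delta_mx 0 i.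

Definition partial {s : nat} {V : normedModType R} (i : 'I_s)
  (f : 'rV[R]_s -> V) (u : 'rV[R]_s) : V := derive f u (ebasis i).

Fixpoint iter_partial {s : nat} {V : normedModType R} (l : seq 'I_s)
  (f : 'rV[R]_s -> V) : 'rV[R]_s -> V :=
  match l with
  | [::] => f
  | i :: l' => partial i (iter_partial l' f)
  end.

Definition smooth_on {s : nat} {V : normedModType R} (U : set 'rV[R]_s)
  (f : 'rV[R]_s -> V) : Prop :=
  forall l : seq 'I_s,
    (forall (i : 'I_s) (u : 'rV[R]_s), U u -> derivable (iter_partial l f) u (ebasis i))
    /\ (forall u, U u -> {for u, continuous (iter_partial l f)}).

Definition tangent_vec {s n : nat} (X : 'rV[R]_s -> 'rV[R]_n.+1) (u : 'rV[R]_s)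
  (a : 'rV[R]_s) : 'rV[R]_n.+1 := \sum_(i < s) a 0 i *: partial i X u.

(* X : U -> R^{n+1}_1 is a spacelike embedding: smooth, injective, a
   homeomorphism onto its image, and every nonzero tangent vector
   dX_u(a) (a <> 0) is spacelike (this includes the immersion property). *)
Definition spacelike_embedding {s n : nat} (U : set 'rV[R]_s)
  (X : 'rV[R]_s -> 'rV[R]_n.+1) : Prop :=
  [/\ smooth_on U X,
      (forall u u', U u -> U u' -> X u = X u' -> u = u'),
      (forall u, U u -> forall e : R, 0 < e -> exists2 d : R, 0 < d &
          forall u', U u' -> `|X u' - X u| < d -> `|u' - u| < e)
    & (forall u, U u -> forall a : 'rV[R]_s, a != 0 ->
          0 < lprod (tangent_vec X u a) (tangent_vec X u a))].

Definition in_normal {s n : nat} (X : 'rV[R]_s -> 'rV[R]_n.+1) (u : 'rV[R]_s)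
  (xi : 'rV[R]_n.+1) : Prop :=
  forall i : 'I_s, lprod xi (partial i X u) = 0.

Definition future_unit_timelike_normal {s n : nat} (U : set 'rV[R]_s)
  (X : 'rV[R]_s -> 'rV[R]_n.+1) (nT : 'rV[R]_s -> 'rV[R]_n.+1) : Prop :=
  smooth_on U nT /\
  forall u, U u ->
    [/\ in_normal X u (nT u), lprod (nT u) (nT u) = -1 & 0 < nT u 0 ord0].

Definition in_N1 {s n : nat} (X : 'rV[R]_s -> 'rV[R]_n.+1)
  (nT : 'rV[R]_s -> 'rV[R]_n.+1) (u : 'rV[R]_s) (xi : 'rV[R]_n.+1) : Prop :=
  [/\ in_normal X u xi, lprod xi xi = 1 & lprod xi (nT u) = 0].

Definition in_Splus {n : nat} (v : 'rV[R]_n.+1) : Prop :=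
  lprod v v = 0 /\ v 0 ord0 = 1.

Definition tilde {n : nat} (x : 'rV[R]_n.+1) : 'rV[R]_n.+1 := (x 0 ord0)^-1 *: x.

Definition LGt {s n : nat} (nT : 'rV[R]_s -> 'rV[R]_n.+1) (u : 'rV[R]_s)
  (xi : 'rV[R]_n.+1) : 'rV[R]_n.+1 := tilde (nT u + xi).

Definition Hfun {s n : nat} (X : 'rV[R]_s -> 'rV[R]_n.+1) (u : 'rV[R]_s)
  (v : 'rV[R]_n.+1) : R := lprod (X u) v.

Definition hfun {s n : nat} (X : 'rV[R]_s -> 'rV[R]_n.+1) (v : 'rV[R]_n.+1) :
  'rV[R]_s -> R := fun u => Hfun X u v.

Definition hessian {s : nat} (f : 'rV[R]_s -> R) (u : 'rV[R]_s) : 'M[R]_s :=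
  \matrix_(i, j) partial i (partial j f) u.

Definition gram {s n : nat} (X : 'rV[R]_s -> 'rV[R]_n.+1) (u : 'rV[R]_s) : 'M[R]_s :=
  \matrix_(i, j) lprod (partial i X u) (partial j X u).

(* coordinates c (w.r.t. the frame X_{u_k}) of pi^tau(w):
   pi^tau(w) = sum_k c_k X_{u_k} with <pi^tau(w), X_{u_l}> = <w, X_{u_l}> *)
Definition tcoords {s n : nat} (X : 'rV[R]_s -> 'rV[R]_n.+1) (u : 'rV[R]_s)
  (w : 'rV[R]_n.+1) : 'rV[R]_s :=
  (\row_l lprod w (partial l X u)) *m invmx (gram X u).

Definition tangent_proj {s n : nat} (X : 'rV[R]_s -> 'rV[R]_n.+1) (u : 'rV[R]_s)
  (w : 'rV[R]_n.+1) : 'rV[R]_n.+1 := tangent_vec X u (tcoords X u w).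

(* S_p(n^T,n^S) applied to the tangent vector dX_u(a) :
   - pi^tau (d(n^T + n^S)(dX_u a)) = - pi^tau (sum_j a_j d_j (n^T+n^S)(u)) *)
Definition shape_op {s n : nat} (X nT nS : 'rV[R]_s -> 'rV[R]_n.+1) (u : 'rV[R]_s)
  (a : 'rV[R]_s) : 'rV[R]_n.+1 :=
  - tangent_proj X u (\sum_(j < s) a 0 j *: partial j (nT \+ nS) u).

(* matrix of S_p(n^T,n^S) in the basis X_{u_1},...,X_{u_s}
   (row j = coordinates of S_p(X_{u_j})) *)
Definition shape_mx {s n : nat} (X nT nS : 'rV[R]_s -> 'rV[R]_n.+1) (u : 'rV[R]_s) :
  'M[R]_s :=
  \matrix_(j, k) tcoords X u (shape_op X nT nS u (ebasis j)) 0 k.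

Definition Kl {s n : nat} (X nT nS : 'rV[R]_s -> 'rV[R]_n.+1) (u : 'rV[R]_s) : R :=
  \det (shape_mx X nT nS u).

Definition flat_umbilical {s n : nat} (X nT nS : 'rV[R]_s -> 'rV[R]_n.+1)
  (u : 'rV[R]_s) : Prop :=
  forall a : 'rV[R]_s, shape_op X nT nS u a = 0.

Definition nondeg_critical {s : nat} (f : 'rV[R]_s -> R) (u : 'rV[R]_s) : Prop :=
  (forall i : 'I_s, partial i f u = 0) /\ \det (hessian f u) != 0.

(* N_1(M)[n^T] is viewed (via X) as the level set
   { (u, xi) : <xi, X_{u_i}(u)> = 0 (all i), <xi, n^T(u)> = 0, <xi, xi> = 1 }
   in U x R^{n+1}; its tangent space at (u, xi) is the kernel of the
   differential of the defining equations.  Differentials are computed as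
   derivatives along the line t |-> (u + t a, xi + t b) at t = 0. *)
Definition tangent_N1 {s n : nat} (X nT : 'rV[R]_s -> 'rV[R]_n.+1) (u : 'rV[R]_s)
  (xi : 'rV[R]_n.+1) (a : 'rV[R]_s) (b : 'rV[R]_n.+1) : Prop :=
  [/\ (forall i : 'I_s,
         derive1 (fun t : R => lprod (xi + t *: b) (partial i X (u + t *: a))) 0 = 0),
      derive1 (fun t : R => lprod (xi + t *: b) (nT (u + t *: a))) 0 = 0
    & derive1 (fun t : R => lprod (xi + t *: b) (xi + t *: b)) 0 = 0].

Definition tangent_Splus {n : nat} (v w : 'rV[R]_n.+1) : Prop :=
  lprod v w = 0 /\ w 0 ord0 = 0.

Definition LG_regular_point {s n : nat} (X nT : 'rV[R]_s -> 'rV[R]_n.+1)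
  (u : 'rV[R]_s) (xi : 'rV[R]_n.+1) : Prop :=
  forall w : 'rV[R]_n.+1, tangent_Splus (LGt nT u xi) w ->
    exists (a : 'rV[R]_s) (b : 'rV[R]_n.+1),
      tangent_N1 X nT u xi a b /\
      derive1 (fun t : R => LGt nT (u + t *: a) (xi + t *: b)) 0 = w.

End LorentzDefs.

(* Main.v *)
Set Warnings "-notation-overridden,-ambiguous-paths,-notation-incompatible-prefix".
Require Import Defs.
From HB Require Import structures.
From mathcomp Require Import all_boot all_order all_algebra.
From mathcomp Require Import all_classical all_reals all_analysis.
From mathcomp Require Import ring lra.
Import Order.TTheory GRing.Theory Num.Theory.
Import numFieldNormedType.Exports.
Local Open Scope classical_set_scope.
Local Open Scope ring_scope.
Section P1.
Context {R : realType}.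

Definition lsg {n : nat} (i : 'I_n.+1) : R := if i == ord0 then -1 else 1.

Lemma lprodE {n : nat} (x y : 'rV[R]_n.+1) :
  lprod x y = \sum_(i < n.+1) lsg i * (x 0 i * y 0 i).
Proof.
rewrite /lprod [RHS](bigD1 ord0) //= /lsg eqxx mulN1r; congr (_ + _).
by apply: eq_bigr => i /negbTE ->; rewrite mul1r.
Qed.

Lemma lprodC {n : nat} (x y : 'rV[R]_n.+1) : lprod x y = lprod y x.
Proof. by rewrite !lprodE; apply: eq_bigr => i _; rewrite (mulrC (x 0 i)). Qed.

Lemma lprodDl {n : nat} (x y z : 'rV[R]_n.+1) : lprod (x + y) z = lprod x z + lprod y z.
Proof. by rewrite !lprodE -big_split; apply: eq_bigr => i _; rewrite !mxE mulrDl mulrDr. Qed.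

Lemma lprodZl {n : nat} (a : R) (x z : 'rV[R]_n.+1) : lprod (a *: x) z = a * lprod x z.
Proof. by rewrite !lprodE mulr_sumr; apply: eq_bigr => i _; rewrite !mxE; ring. Qed.

Lemma lprod0l {n : nat} (z : 'rV[R]_n.+1) : lprod 0 z = 0.
Proof. by rewrite -(scale0r 0) lprodZl mul0r. Qed.

Lemma lprodNl {n : nat} (x z : 'rV[R]_n.+1) : lprod (- x) z = - lprod x z.
Proof. by rewrite -scaleN1r lprodZl mulN1r. Qed.

Lemma lprodBl {n : nat} (x y z : 'rV[R]_n.+1) : lprod (x - y) z = lprod x z - lprod y z.
Proof. by rewrite lprodDl lprodNl. Qed.

Lemma lprodDr {n : nat} (x y z : 'rV[R]_n.+1) : lprod z (x + y) = lprod z x + lprod z y.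
Proof. by rewrite !(lprodC z) lprodDl. Qed.

Lemma lprodZr {n : nat} (a : R) (x z : 'rV[R]_n.+1) : lprod z (a *: x) = a * lprod z x.
Proof. by rewrite !(lprodC z) lprodZl. Qed.

Lemma lprod0r {n : nat} (z : 'rV[R]_n.+1) : lprod z 0 = 0.
Proof. by rewrite lprodC lprod0l. Qed.

Lemma lprodNr {n : nat} (x z : 'rV[R]_n.+1) : lprod z (- x) = - lprod z x.
Proof. by rewrite !(lprodC z) lprodNl. Qed.

Lemma lprodBr {n : nat} (x y z : 'rV[R]_n.+1) : lprod z (x - y) = lprod z x - lprod z y.
Proof. by rewrite !(lprodC z) lprodBl. Qed.

Lemma lprod_suml {n : nat} (I : Type) (r : seq I) (P : pred I) (F : I -> 'rV[R]_n.+1) y :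
  lprod (\sum_(i <- r | P i) F i) y = \sum_(i <- r | P i) lprod (F i) y.
Proof. by apply: (big_morph (fun x => lprod x y)) => [x z|]; rewrite ?lprodDl ?lprod0l. Qed.

Lemma lprod_sumr {n : nat} (I : Type) (r : seq I) (P : pred I) (F : I -> 'rV[R]_n.+1) y :
  lprod y (\sum_(i <- r | P i) F i) = \sum_(i <- r | P i) lprod y (F i).
Proof. by rewrite lprodC lprod_suml; apply: eq_bigr => i _; rewrite lprodC. Qed.

Lemma is_derive_coord {V : normedModType R} {m k : nat} (f : V -> 'M[R]_(m, k)) x v df i j :
  is_derive x v f df -> is_derive x v (fun y => f y i j) (df i j).
Proof.
move=> [fd <-]; split; first by move/derivable_mxP: fd; apply.
by rewrite derive_mx // mxE.
Qed.

Lemma is_derive_lprod {V : normedModType R} {n : nat} {f g : V -> 'rV[R]_n.+1} {x v df dg} :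
  is_derive x v f df -> is_derive x v g dg ->
  is_derive x v (fun y => lprod (f y) (g y)) (lprod df (g x) + lprod (f x) dg).
Proof.
move=> hf hg.
have -> : (fun y => lprod (f y) (g y)) =
   \sum_(i < n.+1) (fun y => lsg i * (f y 0 i * g y 0 i)).
  by apply/funext => y; rewrite fct_sumE lprodE.
have -> : lprod df (g x) + lprod (f x) dg =
   \sum_(i < n.+1) lsg i * (f x 0 i * dg 0 i + g x 0 i * df 0 i).
  rewrite !lprodE -big_split; apply: eq_bigr => i _ /=; ring.
apply: is_derive_sum => i.
have h1 := @is_derive_coord V 1 n.+1 f x v df 0 i hf.
have h2 := @is_derive_coord V 1 n.+1 g x v dg 0 i hg.
have h3 := @is_deriveM R V (fun y => f y 0 i) (fun y => g y 0 i) x v _ _ h1 h2.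
have h4 := @is_deriveZ R V R _ (lsg i) x v _ h3.
exact: h4.
Qed.

End P1.
Section P2.
Context {R : realType}.

Lemma is_derive_line {V W : normedModType R} (g : V -> W) u a t0 dg :
  is_derive (u + t0 *: a) a g dg -> is_derive t0 1 (fun t : R => g (u + t *: a)) dg.
Proof.
have E : (fun h : R => h^-1 *: (((fun t : R => g (u + t *: a)) \o shift t0) (h *: 1) - g (u + t0 *: a)))
  = (fun h : R => h^-1 *: ((g \o shift (u + t0 *: a)) (h *: a) - g (u + t0 *: a))).
  apply/funext => h /=; congr (_ *: (g _ - _)).
  have -> : h%:A = h :> R by rewrite /GRing.scale /= mulr1.
  by rewrite scalerDl addrCA.
move=> [gd <-]; split; first by rewrite /derivable E.
by rewrite /derive E.
Qed.

Lemma mvt_dir {V : normedModType R} (f : V -> R) p v h :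
  (forall c, `|c| <= `|h| -> derivable f (p + c *: v) v) ->
  exists c, `|c| <= `|h| /\ f (p + h *: v) - f p = h * 'D_v f (p + c *: v).
Proof.
move=> hd.
pose phi := fun t : R => f (p + t *: v).
have dphi (c : R) : `|c| <= `|h| -> is_derive c 1 phi ('D_v f (p + c *: v)).
  by move=> hc; apply: is_derive_line; apply: derivableP; apply: hd.
have cphi (c : R) : `|c| <= `|h| -> {for c, continuous phi}.
  move=> hc; apply: differentiable_continuous; apply/derivable1_diffP.
  by have [] := dphi c hc.
have phi0 : phi 0 = f p by rewrite /phi scale0r addr0.
have [h0|h0] := leP 0 h.
- have [] := @MVT_segment R phi (fun c => 'D_v f (p + c *: v)) 0 h h0.
  + move=> x; rewrite in_itv /= => /andP[x0 xh]; apply: dphi.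
    rewrite !ger0_norm //; lra.
  + apply: continuous_subspace_itv => x; rewrite in_itv /= => /andP[x0 xh].
    by apply: cphi; rewrite !ger0_norm.
  move=> c; rewrite in_itv /= => /andP[c0 ch] E; exists c; split.
    by rewrite !ger0_norm.
  by rewrite -phi0 -/(phi h) E subr0 mulrC.
- have h0' : h <= 0 by apply: ltW.
  have [] := @MVT_segment R phi (fun c => 'D_v f (p + c *: v)) h 0 h0'.
  + move=> x; rewrite in_itv /= => /andP[x0 xh]; apply: dphi.
    rewrite !ler0_norm ?ltW //; lra.
  + apply: continuous_subspace_itv => x; rewrite in_itv /= => /andP[x0 xh].
    by apply: cphi; rewrite !ler0_norm //; lra.
  move=> c; rewrite in_itv /= => /andP[c0 ch] E; exists c; split.
    by rewrite !ler0_norm //; lra.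
  rewrite -phi0 -/(phi h); move: E; rewrite sub0r mulrN => E.
  by rewrite -opprB E opprK mulrC.

Qed.

End P2.
Section P3.
Context {R : realType}.

Lemma coord_le_norm {m k : nat} (w : 'M[R]_(m,k)) i j : `|w i j| <= `|w|.
Proof.
rewrite [leRHS]/Num.Def.normr/= mx_normrE.
by apply: le_trans; last exact: (le_bigmax _ _ (i, j)).
Qed.

Lemma norm_le_coord {m k : nat} (w : 'M[R]_(m,k)) B : 0 <= B ->
  (forall i j, `|w i j| <= B) -> `|w| <= B.
Proof.
move=> B0 H; rewrite [leLHS]/Num.Def.normr/= mx_normrE.
by apply: bigmax_le => // -[i j] _; apply: H.
Qed.

Lemma ebasisE {s : nat} (k j : 'I_s) : @ebasis R s k 0 j = (j == k)%:R.
Proof. by rewrite /ebasis mxE eqxx. Qed.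

Definition trunc {s : nat} (a : 'rV[R]_s) (k : nat) : 'rV[R]_s :=
  \row_j (if (j < k)%N then a 0 j else 0).

Lemma trunc0 {s : nat} (a : 'rV[R]_s) : trunc a 0 = 0.
Proof. by apply/rowP => j; rewrite !mxE. Qed.

Lemma truncs {s : nat} (a : 'rV[R]_s) : trunc a s = a.
Proof. by apply/rowP => j; rewrite !mxE ltn_ord. Qed.

Lemma truncS {s : nat} (a : 'rV[R]_s) (k : 'I_s) :
  trunc a k.+1 = trunc a k + a 0 k *: ebasis k.
Proof.
apply/rowP => j; rewrite !mxE ltnS leq_eqVlt eqxx /=.
case: (eqVneq j k) => [->|jk] /=; first by rewrite eqxx ltnn /= mulr1 add0r.
have /negbTE -> : (nat_of_ord j != k) by []. by rewrite /= mulr0 addr0.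
Qed.

Lemma C1_scalar {s : nat} (f : 'rV[R]_s -> R) (U : set 'rV[R]_s) u0 a :
  open U -> U u0 ->
  (forall u j, U u -> derivable f u (ebasis j)) ->
  (forall j, {for u0, continuous (partial j f)}) ->
  is_derive u0 a f (\sum_j a 0 j * partial j f u0).
Proof.
move=> oU Uu0 fd fc.
set L := \sum_j _.
suff H : (fun h : R => h^-1 *: ((f \o shift u0) (h *: a) - f u0)) @ 0^' --> L.
  split; first by apply/cvg_ex; exists L.
  by rewrite /derive; apply: cvg_lim.
apply/cvgrPdist_le => e e0.
set M := \sum_(j < s) `|a 0 j| + 1.
have sA : 0 <= \sum_(j < s) `|a 0 j| by apply: sumr_ge0 => j _.
have M0 : 0 < M by rewrite /M; lra.
set e' := e / M.
have e'0 : 0 < e' by apply: divr_gt0.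
have nU : \forall u \near u0, U u /\ forall j, `|partial j f u0 - partial j f u| <= e'.
  near=> u; split.
    by near: u; apply: open_nbhs_nbhs; split.
  near: u; apply: filter_forall => j.
  by have /cvgrPdist_le /(_ e' e'0) := fc j.
move/nbhs_ballP: nU => [d d0 Hd].
set A := `|a|.
have A0 : 0 <= A by apply: normr_ge0.
have dA : 0 < d / (2 * A + 1) by apply: divr_gt0 => //; lra.
near=> x.
have xn0 : x != 0 by near: x; exact: nbhs_dnbhs_neq.
have xs : `|x| < d / (2 * A + 1) by near: x; apply: dnbhs0_lt.
have xs' : `|x| * (2 * A + 1) < d by rewrite -ltr_pdivlMr //; lra.
have inB : forall (k' : nat) (k : 'I_s) c, `|c| <= `|x| * A ->
    ball u0 d (u0 + x *: trunc a k' + c *: ebasis k).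
  move=> k' k c hc; rewrite -ball_normE /ball_ /= -addrA opprD addrA subrr add0r normrN.
  apply: (@le_lt_trans _ _ (2 * (`|x| * A))); last first.
    have := normr_ge0 x; nra.
  apply: norm_le_coord; first by have := normr_ge0 x; nra.
  move=> i j; rewrite !mxE.
  apply: (le_trans (ler_normD _ _)); rewrite !normrM.
  have h1 : `|if (j < k')%N then a 0 j else 0| <= A.
    by case: ifP => _; rewrite ?normr0 ?coord_le_norm.
  have h2 : `|((i == 0) && (j == k))%:R : R| <= 1.
    by case: (_ && _); rewrite ?normr1 ?normr0.
  have := normr_ge0 x; have := normr_ge0 c; nra.
have Hk : forall k : 'I_s, exists c : R, `|c| <= `|x * a 0 k| /\
    f (u0 + x *: trunc a k.+1) - f (u0 + x *: trunc a k) =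
    (x * a 0 k) * partial k f ((u0 + x *: trunc a k) + c *: ebasis k).
  move=> k; rewrite truncS scalerDr scalerA addrA; apply: mvt_dir => c hc.
  apply: fd; have [] := Hd _ (inB k k c _) => //.
  by apply: (le_trans hc); rewrite normrM ler_wpM2l // coord_le_norm.
have [c Hc] := choice Hk.
have Tel : f (u0 + x *: a) - f u0 = \sum_(k < s)
    (x * a 0 k) * partial k f (u0 + x *: trunc a k + c k *: ebasis k).
  have := telescope_sumr (fun k => f (u0 + x *: trunc a k)) (leq0n s).
  rewrite truncs trunc0 scaler0 addr0 => <-; rewrite big_mkord.
  by apply: eq_bigr => k _; case: (Hc k).
rewrite /= (addrC (x *: a)) Tel.
have -> : x^-1 *: \sum_(k < s) (x * a 0 k) * partial k f (u0 + x *: trunc a k + c k *: ebasis k)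
  = \sum_(k < s) a 0 k * partial k f (u0 + x *: trunc a k + c k *: ebasis k).
  rewrite [_ *: _]mulr_sumr; apply: eq_bigr => k _.
  by rewrite mulrA mulrA mulVf // mul1r.
rewrite /L -sumrB; apply: (le_trans (ler_norm_sum _ _ _)).
apply: (@le_trans _ _ (\sum_(k < s) `|a 0 k| * e')).
  apply: ler_sum => k _; rewrite -mulrBr normrM ler_wpM2l //.
  have [] := Hd _ (inB k k (c k) _) => //.
  case: (Hc k) => hc _; apply: (le_trans hc).
  by rewrite normrM ler_wpM2l // coord_le_norm.
rewrite -mulr_suml /e' /M mulrA ler_pdivrMr //.
nra.
Unshelve. all: by end_near.
Qed.
End P3.
Section P4.
Context {R : realType}.

Lemma is_derive_mx {V : normedModType R} {p m : nat} (M : V -> 'M[R]_(p, m)) t v (D : 'M[R]_(p, m)) :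
  (forall i j, is_derive t v (fun x => M x i j) (D i j)) -> is_derive t v M D.
Proof.
move=> H; have dM : derivable M t v by apply/derivable_mxP => i j; have [] := H i j.
split => //; rewrite derive_mx //; apply/matrixP => i j; rewrite mxE.
by have [] := H i j.
Qed.

Lemma C1_vec {s p m : nat} (f : 'rV[R]_s -> 'M[R]_(p, m)) (U : set 'rV[R]_s) u0 a :
  open U -> U u0 ->
  (forall u j, U u -> derivable f u (ebasis j)) ->
  (forall j, {for u0, continuous (partial j f)}) ->
  is_derive u0 a f (\sum_j a 0 j *: partial j f u0).
Proof.
move=> oU Uu0 fd fc; apply: is_derive_mx => i k.
have E : forall u j, U u -> partial j (fun x => f x i k) u = partial j f u i k.
  by move=> u j Uu; rewrite /partial derive_mx ?mxE //; apply: fd.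
rewrite summxE.
have -> : \sum_j (a 0 j *: partial j f u0) i k = \sum_j a 0 j * partial j (fun x => f x i k) u0.
  by apply: eq_bigr => j _; rewrite E // mxE.
apply: (@C1_scalar R s (fun x => f x i k) U u0 a oU Uu0).
  by move=> u j Uu; move/derivable_mxP: (fd u j Uu); apply.
move=> j; rewrite /continuous_at; apply/(@cvgrPdist_le R R _ (nbhs u0) _) => e e0.
have nU : \forall u \near u0, U u by apply: open_nbhs_nbhs; split.
have /cvgrPdist_le /(_ e e0) := fc j.
apply: filter_app; near=> u => /= Hu.
rewrite !E //; last by near: u.
have -> : partial j f u0 i k - partial j f u i k = (partial j f u0 - partial j f u) i k by rewrite !mxE.
apply: le_trans Hu; exact: coord_le_norm.
Unshelve. all: by end_near.
Qed.

End P4.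
Section S1.
Context {R : realType}.

Lemma is_derive_line0 {V W : normedModType R} {g : V -> W} {u a dg} :
  is_derive u a g dg -> is_derive (0 : R) 1 (fun t : R => g (u + t *: a)) dg.
Proof. by move=> h; apply: is_derive_line; rewrite scale0r addr0. Qed.

Lemma is_derive_affine {V : normedModType R} (x b : V) :
  is_derive (0 : R) 1 (fun t : R => x + t *: b) b.
Proof.
have := @is_derive_line0 V V id x b b (is_derive_id _ _); exact.
Qed.

Lemma sm_d {s : nat} {V : normedModType R} {W : set 'rV[R]_s} {f : 'rV[R]_s -> V} l :
  smooth_on W f -> forall i u, W u -> derivable (iter_partial l f) u (ebasis i).
Proof. by move=> h; case: (h l). Qed.

Lemma sm_c {s : nat} {V : normedModType R} {W : set 'rV[R]_s} {f : 'rV[R]_s -> V} l :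
  smooth_on W f -> forall u, W u -> {for u, continuous (iter_partial l f)}.
Proof. by move=> h; case: (h l). Qed.

Lemma is_derive_partial {s : nat} {V : normedModType R} {f : 'rV[R]_s -> V} {u j} :
  derivable f u (ebasis j) -> is_derive u (ebasis j) f (partial j f u).
Proof. by move=> h; apply: derivableP. Qed.

Lemma derive_near0 {s : nat} {V : normedModType R} {f : 'rV[R]_s -> V} {W : set 'rV[R]_s} {u v} (c : V) :
  open W -> W u -> (forall x, W x -> f x = c) -> 'D_v f u = 0.
Proof.
move=> oW Wu H; rewrite (@near_eq_derive R _ _ f (cst c) u v); first exact: derive_cst.
have : \forall x \near u, W x by apply: open_nbhs_nbhs; split.
by apply: filter_app; near=> x => Wx; apply: H.
Unshelve. all: by end_near.
Qed.

End S1.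

Lemma is_derive_lprodc {R : realType} {V : normedModType R} {n : nat} {f : V -> 'rV[R]_n.+1} {x v df} (w : 'rV[R]_n.+1) :
  is_derive x v f df -> is_derive x v (fun y => lprod (f y) w) (lprod df w).
Proof.
move=> h; have := is_derive_lprod h (is_derive_cst w x v).
by rewrite lprod0r addr0.
Qed.

Section S3.
Context {R : realType}.

Lemma lorentz_ne0 {n : nat} (y x : 'rV[R]_n.+1) :
  lprod y y = 0 -> y 0 ord0 = 1 -> lprod x x = -1 -> lprod y x != 0.
Proof.
move=> yy y0 xx; apply/negP => /eqP yx.
pose sp (p q : 'rV[R]_n.+1) := \sum_(i < n.+1 | i != ord0) p 0 i * q 0 i.
have spE p q : lprod p q = - (p 0 ord0 * q 0 ord0) + sp p q by [].
set x0 := x 0 ord0.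
have E : \sum_(i < n.+1 | i != ord0) (x 0 i - x0 * y 0 i) ^+ 2 =
    sp x x - (2 * x0) * sp y x + x0 ^+ 2 * sp y y.
  rewrite /sp !mulr_sumr -sumrB -big_split /=; apply: eq_bigr => i _; ring.
have : 0 <= \sum_(i < n.+1 | i != ord0) (x 0 i - x0 * y 0 i) ^+ 2.
  by apply: sumr_ge0 => i _; apply: sqr_ge0.
rewrite E.
move: yy y0 xx yx; rewrite !spE => yy y0 xx yx.
have -> : sp x x = x0 ^+ 2 - 1 by rewrite /x0; lra.
have -> : sp y x = x0 by move: yx; rewrite y0 /x0; lra.
have -> : sp y y = 1 by move: yy; rewrite y0; lra.
lra.
Qed.

Lemma tangent_vecZ {s n : nat} (X : 'rV[R]_s -> 'rV[R]_n.+1) u k a :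
  tangent_vec X u (k *: a) = k *: tangent_vec X u a.
Proof.
rewrite /tangent_vec scaler_sumr; apply: eq_bigr => i _; by rewrite mxE scalerA.
Qed.

Lemma tangent_vec0 {s n : nat} (X : 'rV[R]_s -> 'rV[R]_n.+1) u :
  tangent_vec X u 0 = 0.
Proof. by rewrite -(scale0r 0) tangent_vecZ scale0r. Qed.

Lemma d1_lprod_line {s n : nat} (g : 'rV[R]_s -> 'rV[R]_n.+1) (u a : 'rV[R]_s) (xi b : 'rV[R]_n.+1) dg :
  is_derive u a g dg ->
  derive1 (fun t : R => lprod (xi + t *: b) (g (u + t *: a))) 0 = lprod b (g u) + lprod xi dg.
Proof.
move=> h; rewrite derive1E.
have [_ ->] := is_derive_lprod (is_derive_affine xi b) (is_derive_line0 h).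
by rewrite !scale0r !addr0.
Qed.

Lemma d1_lprod_aff {n : nat} (xi b : 'rV[R]_n.+1) :
  derive1 (fun t : R => lprod (xi + t *: b) (xi + t *: b)) 0 = lprod b xi + lprod xi b.
Proof.
rewrite derive1E.
have [_ ->] := is_derive_lprod (is_derive_affine xi b) (is_derive_affine xi b).
by rewrite !scale0r !addr0.
Qed.

End S3.
Section S2.
Context {R : realType} {s n : nat} (U : set 'rV[R]_s)
  (X nT : 'rV[R]_s -> 'rV[R]_n.+1) (u0 : 'rV[R]_s) (v0 : 'rV[R]_n.+1).
Hypothesis oU : open U.
Hypothesis hX : spacelike_embedding U X.
Hypothesis hN : future_unit_timelike_normal U X nT.
Hypothesis Uu0 : U u0.

Let sX : smooth_on U X. Proof. by case: hX. Qed.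
Let sN : smooth_on U nT. Proof. by case: hN. Qed.

Lemma idX {u} j : U u -> is_derive u (ebasis j) X (partial j X u).
Proof. by move=> Uu; apply: is_derive_partial; exact: (sm_d [::] sX j _ Uu). Qed.
Lemma iddX {u} l j : U u -> is_derive u (ebasis j) (partial l X) (partial j (partial l X) u).
Proof. by move=> Uu; apply: is_derive_partial; exact: (sm_d [:: l] sX j _ Uu). Qed.
Lemma idN {u} j : U u -> is_derive u (ebasis j) nT (partial j nT u).
Proof. by move=> Uu; apply: is_derive_partial; exact: (sm_d [::] sN j _ Uu). Qed.

Definition DaX (a : 'rV[R]_s) (l : 'I_s) : 'rV[R]_n.+1 :=
  \sum_j a 0 j *: partial j (partial l X) u0.
Definition DaN (a : 'rV[R]_s) : 'rV[R]_n.+1 := \sum_j a 0 j *: partial j nT u0.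

Lemma dirX (l : 'I_s) a : is_derive u0 a (partial l X) (DaX a l).
Proof.
rewrite /DaX /DaN; apply: (@C1_vec R s 1 n.+1 (partial l X) U u0 a oU Uu0).
  by move=> u j Uu; exact: (sm_d [:: l] sX j _ Uu).
by move=> j; exact: (sm_c [:: j; l] sX _ Uu0).
Qed.

Lemma dirN a : is_derive u0 a nT (DaN a).
Proof.
rewrite /DaX /DaN; apply: (@C1_vec R s 1 n.+1 nT U u0 a oU Uu0).
  by move=> u j Uu; exact: (sm_d [::] sN j _ Uu).
by move=> j; exact: (sm_c [:: j] sN _ Uu0).
Qed.

Lemma ortho_XN (l j : 'I_s) :
  lprod (partial j (partial l X) u0) (nT u0) + lprod (partial l X u0) (partial j nT u0) = 0.
Proof.
have h1 := iddX l j Uu0.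
have h2 := idN j Uu0.
have [_ <-] := is_derive_lprod h1 h2.
apply: (derive_near0 0 oU Uu0) => x Ux.
by rewrite lprodC; case: hN => _ /(_ x Ux) [/(_ l)].
Qed.

Lemma ortho_NN (j : 'I_s) : lprod (partial j nT u0) (nT u0) = 0.
Proof.
have h2 := idN j Uu0.
have [_ E] := is_derive_lprod h2 h2.
have : lprod (partial j nT u0) (nT u0) + lprod (nT u0) (partial j nT u0) = 0.
  rewrite -E; apply: (derive_near0 (-1 : R) oU Uu0) => x Ux.
  by case: hN => _ /(_ x Ux) [].
by rewrite lprodC -mulr2n => /eqP; rewrite mulrn_eq0 /= => /eqP.
Qed.

Lemma partialH (v : 'rV[R]_n.+1) (i : 'I_s) :
  partial i (fun u => Hfun X u v) u0 = lprod (partial i X u0) v.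
Proof.
rewrite /Hfun; have [_ E] := is_derive_lprodc v (idX i Uu0); exact: E.
Qed.

Lemma hessE (v : 'rV[R]_n.+1) (j l : 'I_s) :
  hessian (hfun X v) u0 j l = lprod (partial j (partial l X) u0) v.
Proof.
rewrite /hessian mxE.
have E : partial j (partial l (hfun X v)) u0 = partial j (fun u => lprod (partial l X u) v) u0.
  apply: near_eq_derive.
  have : \forall x \near u0, U x by apply: open_nbhs_nbhs; split.
  apply: filter_app; near=> x => Ux.
  by rewrite /hfun /Hfun; have [_ E] := is_derive_lprodc v (idX l Ux); exact: E.
rewrite E.
by have [_ E2] := is_derive_lprodc v (iddX l j Uu0); exact: E2.
Unshelve. all: by end_near.
Qed.


Lemma lprod_tv (a b : 'rV[R]_s) :
  lprod (tangent_vec X u0 a) (tangent_vec X u0 b) = (a *m gram X u0 *m b^T) 0 0.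
Proof.
rewrite /tangent_vec lprod_suml mxE.
under eq_bigr do rewrite lprodZl lprod_sumr mulr_sumr.
under [RHS]eq_bigr do rewrite !mxE mulr_suml.
rewrite exchange_big; apply: eq_bigr => i _; apply: eq_bigr => k _.
by rewrite lprodZr /gram mxE; ring.
Qed.

Lemma Gpos (a : 'rV[R]_s) : a != 0 -> 0 < (a *m gram X u0 *m a^T) 0 0.
Proof. by move=> a0; rewrite -lprod_tv; case: hX => _ _ _ /(_ u0 Uu0 a a0). Qed.

Lemma Gunit : gram X u0 \in unitmx.
Proof.
rewrite unitmxE unitfE; apply/negP => /det0P [a a0 aG].
by have := Gpos a a0; rewrite aG mul0mx mxE ltxx.
Qed.

Lemma tv_inj (a : 'rV[R]_s) : tangent_vec X u0 a = 0 -> a = 0.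
Proof.
move=> T0; apply/eqP; apply/negP => /negP a0.
by case: hX => _ _ _ /(_ u0 Uu0 a a0); rewrite T0 lprod0l ltxx.
Qed.

Lemma row_tv (y : 'rV[R]_s) :
  \row_l lprod (tangent_vec X u0 y) (partial l X u0) = y *m gram X u0.
Proof.
apply/rowP => l; rewrite !mxE /tangent_vec lprod_suml.
by apply: eq_bigr => i _; rewrite lprodZl !mxE.
Qed.

Lemma tcoords_tv (y : 'rV[R]_s) : tcoords X u0 (tangent_vec X u0 y) = y.
Proof. by rewrite /tcoords row_tv mulmxK // Gunit. Qed.


Hypothesis hS : in_Splus v0.
Let nT0 : [/\ in_normal X u0 (nT u0), lprod (nT u0) (nT u0) = -1 & 0 < nT u0 0 ord0].
Proof. by case: hN => _ /(_ u0 Uu0). Qed.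

Lemma part1 :
  (forall i : 'I_s, partial i (fun u => Hfun X u v0) u0 = 0) <->
     exists2 xi0 : 'rV[R]_n.+1, in_N1 X nT u0 xi0 & v0 = LGt nT u0 xi0.
Proof.
have [nTn nTT _] := nT0.
have [vv v00] := hS.
split.
- move=> H.
  have vX i : lprod v0 (partial i X u0) = 0 by rewrite lprodC -partialH H.
  set q := lprod v0 (nT u0).
  have q0 : q != 0 by apply: lorentz_ne0.
  set mu := - q^-1.
  have mu0 : mu != 0 by rewrite oppr_eq0 invr_eq0.
  have mq : mu * q = -1 by rewrite /mu mulNr mulVf.
  exists (mu *: v0 - nT u0).
    split.
    + by move=> i; rewrite lprodBl lprodZl vX nTn mulr0 subr0.
    + rewrite !lprodBl !lprodBr !lprodZl !lprodZr vv nTT (lprodC (nT u0) v0) -/q.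
      by rewrite mulr0 mulr0 mq; ring.
    + by rewrite lprodBl lprodZl -/q mq nTT opprK addNr.
  rewrite /LGt /tilde addrC subrK mxE v00 mulr1 scalerA mulVf // scale1r.
  by [].
- move=> [xi [xn _ _] ->] i.
  rewrite partialH /LGt /tilde lprodZr lprodDr.
  by rewrite lprodC nTn lprodC xn addr0 mulr0.
Qed.


Variable xi0 : 'rV[R]_n.+1.
Hypothesis hxi : in_N1 X nT u0 xi0.
Hypothesis hv : v0 = LGt nT u0 xi0.

Definition cc := (nT u0 + xi0) 0 ord0.

Lemma cc_neq0 : cc != 0.
Proof.
apply/negP => /eqP c0; have [_ v00] := hS.
move: v00; rewrite hv /LGt /tilde -/cc c0 invr0 scale0r mxE => /eqP.
by rewrite eq_sym oner_eq0.
Qed.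

Lemma NTxi : nT u0 + xi0 = cc *: v0.
Proof. by rewrite hv /LGt /tilde -/cc scalerA mulfV ?cc_neq0 // scale1r. Qed.

Lemma v0_X l : lprod v0 (partial l X u0) = 0.
Proof.
have [nTn _ _] := nT0; have [xn _ _] := hxi.
by rewrite hv /LGt /tilde lprodZl lprodDl nTn xn addr0 mulr0.
Qed.

Lemma v0_nT : lprod v0 (nT u0) = - cc^-1.
Proof.
have [_ nTT _] := nT0; have [_ _ xnT] := hxi.
by rewrite hv /LGt /tilde -/cc lprodZl lprodDl nTT xnT addr0 mulrN1.
Qed.

Lemma v0_xi : lprod v0 xi0 = cc^-1.
Proof.
have [_ _ xnT] := hxi; have [_ xx _] := hxi.
by rewrite hv /LGt /tilde -/cc lprodZl lprodDl lprodC xnT xx add0r mulr1.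
Qed.

Lemma DaN_X a l : lprod (DaN a) (partial l X u0) = - lprod (DaX a l) (nT u0).
Proof.
rewrite /DaN /DaX lprod_suml lprod_suml -sumrN; apply: eq_bigr => j _.
rewrite !lprodZl -mulrN; congr (_ * _).
by have := ortho_XN l j; rewrite (lprodC (partial l X u0)) => /eqP; rewrite addrC addr_eq0 => /eqP.
Qed.

Lemma DaN_N a : lprod (DaN a) (nT u0) = 0.
Proof.
rewrite /DaN lprod_suml big1 // => j _; by rewrite lprodZl ortho_NN mulr0.
Qed.

Lemma DaX_v0 a l : lprod (DaX a l) v0 = (a *m hessian (hfun X v0) u0) 0 l.
Proof.
rewrite /DaX lprod_suml mxE; apply: eq_bigr => j _.
by rewrite lprodZl hessE.
Qed.


Lemma tN1_iff a b : tangent_N1 X nT u0 xi0 a b <->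
  [/\ forall i, lprod b (partial i X u0) + lprod xi0 (DaX a i) = 0,
      lprod b (nT u0) + lprod xi0 (DaN a) = 0
    & lprod b xi0 + lprod xi0 b = 0].
Proof.
rewrite /tangent_N1 d1_lprod_aff (d1_lprod_line _ _ _ _ _ _ (dirN a)).
have E i : derive1 (fun t : R => lprod (xi0 + t *: b) (partial i X (u0 + t *: a))) 0
   = lprod b (partial i X u0) + lprod xi0 (DaX a i).
  exact: (d1_lprod_line _ _ _ _ _ _ (dirX i a)).
split => -[h1 h2 h3].
  by split; [move=> i; rewrite -E; exact: h1 i | exact: h2 | exact: h3].
by split; [move=> i; rewrite E; exact: h1 i | exact: h2 | exact: h3].
Qed.

Lemma d1_LGt a b :
  derive1 (fun t : R => LGt nT (u0 + t *: a) (xi0 + t *: b)) 0 =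
  cc^-1 *: ((DaN a + b) - (DaN a + b) 0 ord0 *: v0).
Proof.
pose Phi := fun t : R => nT (u0 + t *: a) + (xi0 + t *: b).
have hP : is_derive (0 : R) 1 Phi (DaN a + b).
  exact: is_deriveD (is_derive_line0 (dirN a)) (is_derive_affine xi0 b).
have P0 : Phi 0 = nT u0 + xi0 by rewrite /Phi !scale0r !addr0.
have c0 := cc_neq0.
rewrite derive1E.
set D := DaN a + b.
have hd : is_derive (0 : R) 1 (fun t : R => LGt nT (u0 + t *: a) (xi0 + t *: b))
    (cc^-1 *: (D - D 0 ord0 *: v0)).
  apply: is_derive_mx => i k.
  have e1 := is_derive_coord _ _ _ _ i k hP.
  have e0 := is_derive_coord _ _ _ _ 0 ord0 hP.
  have P00 : Phi 0 0 ord0 != 0 by rewrite P0.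
  have e0i : is_derive (0 : R) 1 (fun t => (Phi t 0 ord0)^-1) (- (Phi 0 0 ord0) ^- 2 *: D 0 ord0).
    split; first by apply: derivableV => //; case: e0.
    by rewrite deriveV //; case: e0 => _ ->.
  have := is_deriveM e0i e1.
  rewrite /LGt /tilde.
  have -> : (fun t : R => ((Phi t 0 ord0)^-1 *: Phi t) i k) =
     (fun t => (Phi t 0 ord0)^-1) * (fun t => Phi t i k).
    by apply/funext => t; rewrite mxE.
  move=> h; apply: (is_derive_eq h).
  have sE : forall x y : R, x *: y = x * y by [].
  have [_ v00] := hS.
  rewrite /Phi !scale0r !addr0 NTxi !mxE [i]ord1 v00 !sE mulr1.
  by field.
by have [_ ->] := hd.
Qed.


Lemma part4 : nondeg_critical (hfun X v0) u0 <-> LG_regular_point X nT u0 xi0.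
Proof.
set H := hessian (hfun X v0) u0.
have c0 := cc_neq0.
have [_ v00] := hS.
have [_ _ xnT] := hxi.
have [nTn nTT _] := nT0.
split.
- move=> [_ dH] w; rewrite -hv => -[wv w0].
  have Hu : H \in unitmx by rewrite unitmxE unitfE.
  set r := \row_l lprod w (partial l X u0).
  set a := - (r *m invmx H).
  have aH : a *m H = - r by rewrite /a mulNmx mulmxKV.
  set lam := cc * (cc * lprod w (nT u0) + lprod xi0 (DaN a)).
  exists a, (cc *: w + lam *: v0 - DaN a); split.
    apply/tN1_iff; split.
    + move=> l; rewrite !lprodBl !lprodDl !lprodZl v0_X DaN_X mulr0 addr0.
      rewrite (lprodC xi0) opprK -addrA -lprodDr NTxi lprodZr DaX_v0 aH.
      by rewrite !mxE; ring.
    + rewrite !lprodBl !lprodDl !lprodZl v0_nT DaN_N /lam; field; exact: c0.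
    + rewrite (lprodC xi0) !lprodBl !lprodDl !lprodZl v0_xi /lam.
      have wxi : lprod w xi0 = - lprod w (nT u0).
        have : lprod w (nT u0 + xi0) = 0 by rewrite NTxi lprodZr lprodC wv mulr0.
        by rewrite lprodDr => /eqP; rewrite addrC addr_eq0 => /eqP.
      rewrite wxi (lprodC (DaN a)); field; exact: c0.
  rewrite d1_LGt.
  have -> : DaN a + (cc *: w + lam *: v0 - DaN a) = cc *: w + lam *: v0.
    by rewrite addrC subrK.
  rewrite !mxE w0 v00 mulr0 add0r mulr1 addrK scalerA mulVf // scale1r.
  by [].
- move=> reg; split.
    move=> i; have := (part1.2 (ex_intro2 _ _ xi0 hxi hv)) i; exact.
  apply/negP => /eqP dH.
  have [z z0 zH] : exists2 z : 'rV[R]_s, z != 0 & z *m H^T = 0.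
    by apply/det0P; rewrite det_tr dH.
  set T := tangent_vec X u0 z.
  set w := T - T 0 ord0 *: v0.
  have vT : lprod v0 T = 0.
    rewrite /T /tangent_vec lprod_sumr big1 // => i _.
    by rewrite lprodZr v0_X mulr0.
  have [a [b [tn dl]]] : exists a b, tangent_N1 X nT u0 xi0 a b /\
      derive1 (fun t : R => LGt nT (u0 + t *: a) (xi0 + t *: b)) 0 = w.
    apply: reg; rewrite -hv; split.
      by rewrite lprodBr lprodZr vT (proj1 hS) mulr0 subr0.
    by rewrite /w !mxE v00 mulr1 subrr.
  move/tN1_iff: tn => [t1 _ _].
  have zG : z *m gram X u0 = - (a *m H).
    apply/rowP => l; rewrite -row_tv !mxE.
    have : lprod w (partial l X u0) = - (a *m H) 0 l.
      rewrite -dl d1_LGt lprodZl lprodBl lprodZl v0_X mulr0 subr0 lprodDl.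
      rewrite DaN_X.
      have := t1 l; rewrite (lprodC xi0) => /eqP; rewrite addr_eq0 => /eqP ->.
      rewrite -opprD -lprodDr NTxi lprodZr DaX_v0.
      by rewrite mulrN mulrA mulVf // mul1r.
    by rewrite /w lprodBl lprodZl v0_X mulr0 subr0 => ->; rewrite mxE.
  have := Gpos z z0; rewrite zG mulNmx -mulmxA.
  have -> : H *m z^T = 0 by rewrite -[H]trmxK -trmx_mul zH trmx0.
  by rewrite mulmx0 oppr0 mxE ltxx.
Qed.


Variables (W : set 'rV[R]_s) (nS : 'rV[R]_s -> 'rV[R]_n.+1).
Hypothesis oW : open W.
Hypothesis WU : W `<=` U.
Hypothesis Wu0 : W u0.
Hypothesis sS : smooth_on W nS.
Hypothesis hNS : forall u, W u -> in_N1 X nT u (nS u).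
Hypothesis nS0 : nS u0 = xi0.

Lemma idS j : is_derive u0 (ebasis j) nS (partial j nS u0).
Proof. by apply: is_derive_partial; exact: (sm_d [::] sS j _ Wu0). Qed.

Lemma ortho_XS (l j : 'I_s) :
  lprod (partial j (partial l X) u0) (nS u0) + lprod (partial l X u0) (partial j nS u0) = 0.
Proof.
have [_ <-] := is_derive_lprod (iddX l j Uu0) (idS j).
apply: (derive_near0 0 oW Wu0) => x Wx.
by rewrite lprodC; case: (hNS x Wx) => /(_ l).
Qed.

Lemma K_id j l :
  lprod (partial j (nT \+ nS) u0) (partial l X u0) = - cc * hessian (hfun X v0) u0 j l.
Proof.
have [_ E] := is_deriveD (idN j Uu0) (idS j).
rewrite -[partial j (nT \+ nS) u0]/('D_(ebasis j) (nT + nS) u0) E.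
rewrite lprodDl (lprodC (partial j nT u0)) (lprodC (partial j nS u0)).
have := ortho_XN l j; rewrite addrC => /eqP; rewrite addr_eq0 => /eqP ->.
have := ortho_XS l j; rewrite addrC => /eqP; rewrite addr_eq0 => /eqP ->.
rewrite nS0 -opprD -lprodDr NTxi lprodZr hessE; ring.
Qed.

Lemma shape_op_E a : shape_op X nT nS u0 a =
  tangent_vec X u0 (cc *: (a *m hessian (hfun X v0) u0 *m invmx (gram X u0))).
Proof.
rewrite /shape_op /tangent_proj -scaleN1r -tangent_vecZ; congr tangent_vec.
rewrite /tcoords !scalemxAl; congr (_ *m _).
apply/rowP => l; rewrite !mxE lprod_suml mulr_sumr; apply: eq_bigr => j _.
by rewrite lprodZl K_id !mxE; ring.
Qed.

Lemma shape_mx_E : shape_mx X nT nS u0 = cc *: (hessian (hfun X v0) u0 *m invmx (gram X u0)).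
Proof.
apply/matrixP => j k; rewrite /shape_mx [LHS]mxE shape_op_E tcoords_tv.
rewrite [LHS]mxE [RHS]mxE; congr (_ * _); rewrite /ebasis -rowE -row_mul mxE.
by [].
Qed.

Lemma part2 : Kl X nT nS u0 = 0 <-> \det (hessian (hfun X v0) u0) = 0.
Proof.
rewrite /Kl shape_mx_E detZ det_mulmx det_inv.
have c0 := cc_neq0.
have G0 : \det (gram X u0) != 0 by have := Gunit; rewrite unitmxE unitfE.
split => [/eqP|->]; last by rewrite mul0r mulr0.
rewrite !mulf_eq0 expf_eq0 (negbTE c0) andbF /= invr_eq0 (negbTE G0) orbF.
by move/eqP.
Qed.

Lemma part3 : flat_umbilical X nT nS u0 <-> \rank (hessian (hfun X v0) u0) = 0%N.
Proof.
set H := hessian (hfun X v0) u0.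
have c0 := cc_neq0.
have Gu := Gunit.
rewrite /flat_umbilical; split.
- move=> fl; apply/eqP; rewrite mxrank_eq0; apply/eqP.
  apply/row_matrixP => j; rewrite row0 rowE.
  have := fl (delta_mx 0 j); rewrite shape_op_E => /tv_inj /eqP.
  rewrite scaler_eq0 (negbTE c0) /= => /eqP E.
  by rewrite -[_ *m H](mulmxKV Gu) E mul0mx.
- move/eqP; rewrite mxrank_eq0 => /eqP H0 a.
  by rewrite shape_op_E -/H H0 mulmx0 mul0mx scaler0 tangent_vec0.
Qed.

End S2.

Theorem proposition5p1 (R : realType) (s n : nat) (U : set 'rV[R]_s)
  (X nT : 'rV[R]_s -> 'rV[R]_n.+1) (u0 : 'rV[R]_s) (v0 : 'rV[R]_n.+1) :
  open U -> spacelike_embedding U X -> future_unit_timelike_normal U X nT ->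
  U u0 -> in_Splus v0 ->
  ((forall i : 'I_s, partial i (fun u => Hfun X u v0) u0 = 0) <->
     exists2 xi0 : 'rV[R]_n.+1, in_N1 X nT u0 xi0 & v0 = LGt nT u0 xi0)
  /\
  (forall xi0 : 'rV[R]_n.+1, in_N1 X nT u0 xi0 -> v0 = LGt nT u0 xi0 ->
   forall (W : set 'rV[R]_s) (nS : 'rV[R]_s -> 'rV[R]_n.+1),
     open W -> W `<=` U -> W u0 -> smooth_on W nS ->
     (forall u, W u -> in_N1 X nT u (nS u)) -> nS u0 = xi0 ->
     [/\ Kl X nT nS u0 = 0 <-> \det (hessian (hfun X v0) u0) = 0,
         flat_umbilical X nT nS u0 <-> \rank (hessian (hfun X v0) u0) = 0%N
       & nondeg_critical (hfun X v0) u0 <-> LG_regular_point X nT u0 xi0]).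
Proof.
move=> oU hX hN Uu0 hS; split; first exact: (@part1 _ _ _ U X nT u0 v0 hX hN Uu0 hS).
move=> xi0 hxi hv W nS oW WU Wu0 sS hNS nS0; split.
- exact: (@part2 _ _ _ U X nT u0 v0 oU hX hN Uu0 hS xi0 hv W nS oW Wu0 sS hNS nS0).
- exact: (@part3 _ _ _ U X nT u0 v0 oU hX hN Uu0 hS xi0 hv W nS oW Wu0 sS hNS nS0).
- exact: (@part4 _ _ _ U X nT u0 v0 oU hX hN Uu0 hS xi0 hxi hv).
Qed.
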